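(* Let $X$ be a real Banach space, $Y$ a (closed linear) subspace of $X$, $F=\{x_1,\dots,x_N\}$ a finite subset of $X$, $f:[0,\infty)^N\to[0,\infty)$ a monotone function, and $\varepsilon>0$. Then: (a) $\mathrm{rad}_Y^f(F)=\inf\{r_f(y,F): y\in\bigcup_{i=1}^N B[x_i,\mathrm{rad}_Y(F)+\varepsilon]\cap Y\}=\inf\{r_f(y,F): y\in Y,\ \|y\|\le\max_{1\le i\le N}\|x_i\|+\mathrm{rad}_Y(F)+\varepsilon\}$; (b) if $f$ is weakly strictly monotone, then $\mathrm{Cent}_Y^f(F)\subseteq\bigcup_{i=1}^N B[x_i,\mathrm{rad}_Y(F)+\varepsilon]\cap Y$; (c) if $f$ is weakly strictly monotone, then $\mathrm{Cent}_Y^f(F)\subseteq\bigcap_{i=1}^N B[x_i,\mathrm{rad}_Y(F)+\mathrm{diam}(F)+\varepsilon]\cap Y$.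
   Context: $B[x,r]$ is the closed ball with center $x$ and radius $r$. $f$ is monotone if $a\le b$ coordinatewise implies $f(a)\le f(b)$, weakly strictly monotone if monotone and $a_i<b_i$ for all $i$ implies $f(a)<f(b)$. $r_f(x,F)=f(\|x-x_1\|,\dots,\|x-x_N\|)$, $\mathrm{rad}_Y^f(F)=\inf_{y\in Y}r_f(y,F)$, $\mathrm{Cent}_Y^f(F)=\{y\in Y:r_f(y,F)=\mathrm{rad}_Y^f(F)\}$, and $\mathrm{rad}_Y(F)=\inf_{y\in Y}\max_{1\le i\le N}\|y-x_i\|$ is the restricted Chebyshev radius. *)

(* Defs.v *)
From HB Require Import structures.
From mathcomp Require Import all_boot all_order all_algebra.
From mathcomp Require Import all_classical all_reals all_analysis.
Set Implicit Arguments. Unset Strict Implicit. Unset Printing Implicit Defensive.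
Import Order.TTheory GRing.Theory Num.Theory.
Import numFieldNormedType.Exports.
Local Open Scope classical_set_scope.
Local Open Scope ring_scope.

Section Defs.
Variables (R : realType) (X : normedModType R) (N : nat).

Definition closed_subspace (Y : set X) : Prop :=
  [/\ Y 0, (forall u v, Y u -> Y v -> Y (u + v)),
      (forall (a : R) u, Y u -> Y (a *: u)) & closed Y].

Definition cball_of (x : X) (r : R) : set X := [set z | `|z - x| <= r].

Definition nonneg_vec (a : 'I_N -> R) : Prop := forall i, 0 <= a i.

Definition nonneg_fun (f : ('I_N -> R) -> R) : Prop :=
  forall a, nonneg_vec a -> 0 <= f a.

Definition monotone_fun (f : ('I_N -> R) -> R) : Prop :=
  forall a b, nonneg_vec a -> nonneg_vec b ->
    (forall i, a i <= b i) -> f a <= f b.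

Definition weakly_strictly_monotone (f : ('I_N -> R) -> R) : Prop :=
  monotone_fun f /\
  forall a b, nonneg_vec a -> nonneg_vec b ->
    (forall i, a i < b i) -> f a < f b.

Variables (f : ('I_N -> R) -> R) (x : 'I_N -> X).

Definition rf (y : X) : R := f (fun i => `|y - x i|).

Definition radf (Y : set X) : R := inf [set rf y | y in Y].

Definition centf (Y : set X) : set X := [set y | Y y /\ rf y = radf Y].

Definition cheb_rad (Y : set X) : R :=
  inf [set \big[Num.max/0]_(i < N) `|y - x i| | y in Y].

Definition diamF : R := \big[Num.max/0]_(i < N) \big[Num.max/0]_(j < N) `|x i - x j|.

End Defs.

(* Main.v *)
Require Import Defs.
From HB Require Import structures.
From mathcomp Require Import all_boot all_order all_algebra.
From mathcomp Require Import all_classical all_reals all_analysis.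
Import Order.TTheory GRing.Theory Num.Theory.
Import numFieldNormedType.Exports.
Local Open Scope classical_set_scope.
Local Open Scope ring_scope.

Section Aux.
Variables (R : realType) (X : completeNormedModType R) (N : nat).
Variables (x : 'I_N -> X) (f : ('I_N -> R) -> R).

Lemma nnv (y : X) : nonneg_vec (fun i => `|y - x i|).
Proof. by move=> i. Qed.

Lemma inf_sub (A B : set X) : nonneg_fun f -> A `<=` B -> A !=set0 ->
  inf [set rf f x y | y in B] <= inf [set rf f x y | y in A].
Proof.
move=> f0 AB [a Aa]; apply: lb_le_inf; first by exists (rf f x a), a.
move=> _ [y Ay <-]; apply: ge_inf; last by exists y => //; apply: AB.
by exists 0 => _ [z _ <-]; apply: f0; apply: nnv.
Qed.

Lemma exists_close (Y : set X) (eps : R) : Y 0 -> 0 < eps ->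
  exists2 y0, Y y0 & forall i, `|y0 - x i| < cheb_rad x Y + eps.
Proof.
move=> Y0 e0.
have [v [y0 Yy0 <-] hv] : exists2 v,
   [set \big[Num.max/0]_(i < N) `|y - x i| | y in Y] v & v < cheb_rad x Y + eps.
  apply: inf_lt; first by exists (\big[Num.max/0]_(i < N) `|0 - x i|), 0.
  by rewrite ltrDl.
exists y0 => // i; apply: le_lt_trans hv; exact: (le_bigmax _ (fun i => `|y0 - x i|)).
Qed.

End Aux.

Theorem proposition4p2 (R : realType) (X : completeNormedModType R) (N : nat)
    (Y : set X) (x : 'I_N -> X) (f : ('I_N -> R) -> R) (eps : R) :
  (0 < N)%N -> closed_subspace Y -> nonneg_fun f -> monotone_fun f -> 0 < eps ->
  (* (a) *)
  (radf f x Y =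
     inf [set rf f x y | y in (\bigcup_(i in [set: 'I_N]) cball_of (x i) (cheb_rad x Y + eps)) `&` Y]
   /\ radf f x Y =
     inf [set rf f x y | y in [set y | Y y /\
            `|y| <= \big[Num.max/0]_(i < N) `|x i| + cheb_rad x Y + eps]]) /\
  (weakly_strictly_monotone f ->
     (* (b) *)
     centf f x Y `<=` (\bigcup_(i in [set: 'I_N]) cball_of (x i) (cheb_rad x Y + eps)) `&` Y
     (* (c) *)
  /\ centf f x Y `<=` (\bigcap_(i in [set: 'I_N]) cball_of (x i) (cheb_rad x Y + diamF x + eps)) `&` Y).
Proof.
move=> N0 [Y0 _ _ _] f0 fm e0.
have [y0 Yy0 hy0] := @exists_close _ _ _ x _ _ Y0 e0.
set c := cheb_rad x Y.
set S1 := (\bigcup_(i in [set: 'I_N]) cball_of (x i) (c + eps)) `&` Y.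
set S2 := [set y | Y y /\ `|y| <= \big[Num.max/0]_(i < N) `|x i| + c + eps].
have S1y0 : S1 y0.
  split=> //; exists (Ordinal N0) => //; rewrite /cball_of /=; exact/ltW.
have S1Y : S1 `<=` Y by move=> y [].
have S12 : S1 `<=` S2.
  move=> y [[i _ hi] Yy]; split=> //.
  rewrite -addrA; apply: le_trans (_ : `|x i| + (c + eps) <= _).
    have -> : y = (y - x i) + x i by rewrite subrK.
    by rewrite addrC; apply: le_trans (ler_normD _ _) _; rewrite lerD2l.
  by rewrite lerD2r; exact: (le_bigmax _ (fun i => `|x i|)).
have S2Y : S2 `<=` Y by move=> y [].
have lb : forall (A : set X), has_lbound [set rf f x y | y in A].
  by move=> A; exists 0 => _ [z _ <-]; apply: f0; apply: nnv.
have key : inf [set rf f x y | y in S1] <= radf f x Y.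
  apply: lb_le_inf; first by exists (rf f x 0), 0.
  move=> _ [y Yy <-].
  have [S1y|nS1y] := pselect (S1 y).
    by apply: ge_inf => //; exists y.
  apply: le_trans (_ : rf f x y0 <= _); first by apply: ge_inf => //; exists y0.
  apply: fm; try exact: nnv.
  move=> i; apply/ltW; apply: lt_le_trans (hy0 i) _.
  rewrite leNgt; apply/negP => hlt; apply: nS1y; split=> //.
  by exists i => //; rewrite /cball_of /=; exact/ltW.
have e1 : radf f x Y = inf [set rf f x y | y in S1].
  apply/eqP; rewrite eq_le key andbT; apply: (@inf_sub _ _ _ x) => //; by exists y0.
split.
  split=> //; apply/eqP; rewrite eq_le; apply/andP; split.
    by apply: (@inf_sub _ _ _ x) => //; exists y0; apply: S12.
  by rewrite e1; apply: (@inf_sub _ _ _ x) => //; exists y0.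
move=> [_ fs].
have hb : centf f x Y `<=` S1.
  move=> y [Yy hy]; apply: contrapT => nS1y.
  have : rf f x y0 < rf f x y.
    apply: fs; try exact: nnv.
    move=> i; apply: lt_le_trans (hy0 i) _.
    rewrite leNgt; apply/negP => hlt; apply: nS1y; split=> //.
    by exists i => //; rewrite /cball_of /=; exact/ltW.
  rewrite hy ltNge => /negP; apply; apply: ge_inf => //; by exists y0.
split=> // y /hb [[i _ hi] Yy]; split=> // j _; rewrite /cball_of /=.
have -> : y - x j = (y - x i) + (x i - x j) by rewrite addrA subrK.
apply: le_trans (ler_normD _ _) _.
rewrite addrAC; apply: lerD => //.
apply: le_trans (_ : \big[Num.max/0]_(j0 < N) `|x i - x j0| <= _).
  exact: (le_bigmax _ (fun j0 => `|x i - x j0|)).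
exact: (le_bigmax _ (fun i0 => \big[Num.max/0]_(j0 < N) `|x i0 - x j0|)).
Qed.
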